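(* Let $f=p/q$ be a rational function with $p,q$ of degree $l$, positive on the standard simplex $\Delta$, with $b_\alpha(q,j,\Delta)>0$ for all $|\alpha|=j$, $j\ge l$. Then there exists $k\ge l$ such that $\min_{|\alpha|=k} b_\alpha(f,k,\Delta)>0$.
   Context: $\Delta$ is the standard simplex in $\mathbb{R}^n$ with barycentric coordinates $\lambda=(1-\sum x_i,x_1,\dots,x_n)$; $B^{(k)}_\alpha=\frac{k!}{\alpha_0!\cdots\alpha_n!}\lambda^\alpha$ ($\alpha\in\mathbb{N}^{n+1}$, $|\alpha|=k$) are the Bernstein polynomials of degree $k$; $b_\alpha(p,k,\Delta)$ denote the coefficients of $p$ in this basis and $b_\alpha(f,k,\Delta)=b_\alpha(p,k,\Delta)/b_\alpha(q,k,\Delta)$ are the rational Bernstein coefficients. *)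

(* Defs.v *)
From Stdlib Require Import Reals List Arith.
Import ListNotations.
Open Scope R_scope.

Fixpoint compositions (m k : nat) : list (list nat) :=
  match m with
  | O => match k with O => [[]] | S _ => [] end
  | S m' => flat_map (fun i => map (cons i) (compositions m' (k - i)))
                     (seq 0 (S k))
  end.

Definition monomials (n l : nat) : list (list nat) :=
  flat_map (fun d => compositions n d) (seq 0 (S l)).

Definition sumR {A : Type} (s : list A) (f : A -> R) : R :=
  fold_right (fun a acc => f a + acc) 0 s.

Fixpoint prodpow (x : nat -> R) (i : nat) (beta : list nat) : R :=
  match beta with
  | [] => 1
  | b :: bs => x i ^ b * prodpow x (S i) bs
  end.

(* A polynomial in n variables x_1..x_n (stored as x 0 .. x (n-1)) of degree
   at most l is given by its coefficient function c on exponent vectors;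
   only the coefficients of the monomials with |beta| <= l matter. *)
Definition peval (n l : nat) (c : list nat -> R) (x : nat -> R) : R :=
  sumR (monomials n l) (fun beta => c beta * prodpow x 0 beta).

Definition bary (n : nat) (x : nat -> R) (i : nat) : R :=
  match i with
  | O => 1 - sumR (seq 0 n) x
  | S j => x j
  end.

Definition in_simplex (n : nat) (x : nat -> R) : Prop :=
  (forall i, (i < n)%nat -> 0 <= x i) /\ sumR (seq 0 n) x <= 1.

Definition multinom (k : nat) (alpha : list nat) : R :=
  INR (fact k) / fold_right (fun a acc => INR (fact a) * acc) 1 alpha.

Definition bernstein (n k : nat) (alpha : list nat) (x : nat -> R) : R :=
  multinom k alpha * prodpow (bary n x) 0 alpha.

Definition is_bernstein_coeffs (n l : nat) (c : list nat -> R) (k : nat)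
    (b : list nat -> R) : Prop :=
  forall x : nat -> R,
    peval n l c x = sumR (compositions (S n) k) (fun alpha => b alpha * bernstein n k alpha x).

(* Main.v *)
Require Import Defs.
From Stdlib Require Import Reals List Arith Lra Lia ClassicalEpsilon.
Import ListNotations.
Open Scope R_scope.


Lemma sumR_app {A} (s t : list A) f : sumR (s ++ t) f = sumR s f + sumR t f.
Proof. induction s; simpl; [lra| rewrite IHs; lra]. Qed.

Lemma sumR_map {A B} (g : A -> B) s f : sumR (map g s) f = sumR s (fun a => f (g a)).
Proof. induction s; simpl; auto. rewrite IHs; auto. Qed.

Lemma sumR_flat_map {A B} (g : A -> list B) s f :
  sumR (flat_map g s) f = sumR s (fun a => sumR (g a) f).
Proof. induction s; simpl; auto. rewrite sumR_app, IHs; auto. Qed.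

Lemma sumR_ext {A} (s : list A) f g : (forall a, In a s -> f a = g a) -> sumR s f = sumR s g.
Proof. induction s; simpl; intros; auto. rewrite H, IHs; auto. Qed.

Lemma sumR_plus {A} (s : list A) f g : sumR s (fun a => f a + g a) = sumR s f + sumR s g.
Proof. induction s; simpl; [lra| rewrite IHs; lra]. Qed.

Lemma sumR_scal {A} (s : list A) c f : sumR s (fun a => c * f a) = c * sumR s f.
Proof. induction s; simpl; [lra| rewrite IHs; lra]. Qed.

Lemma sumR_scalr {A} (s : list A) c f : sumR s (fun a => f a * c) = sumR s f * c.
Proof. induction s; simpl; [lra| rewrite IHs; lra]. Qed.

Lemma sumR_zero {A} (s : list A) : sumR s (fun _ => 0) = 0.
Proof. induction s; simpl; [lra| rewrite IHs; lra]. Qed.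

Lemma sumR_swap {A B} (s : list A) (t : list B) f :
  sumR s (fun a => sumR t (fun b => f a b)) = sumR t (fun b => sumR s (fun a => f a b)).
Proof.
  induction s; simpl. symmetry; apply sumR_zero.
  rewrite IHs, <- sumR_plus. auto.
Qed.

Lemma sumR_le {A} (s : list A) f g : (forall a, In a s -> f a <= g a) -> sumR s f <= sumR s g.
Proof. induction s; simpl; intros; [lra|]. pose proof (H a (or_introl eq_refl)).
  assert (sumR s f <= sumR s g) by (apply IHs; auto). lra. Qed.

Lemma sumR_nonneg {A} (s : list A) f : (forall a, In a s -> 0 <= f a) -> 0 <= sumR s f.
Proof. intros. rewrite <- (sumR_zero s). apply sumR_le; auto. Qed.

Lemma sumR_abs {A} (s : list A) f : Rabs (sumR s f) <= sumR s (fun a => Rabs (f a)).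
Proof. induction s; simpl. rewrite Rabs_R0; lra.
  eapply Rle_trans. apply Rabs_triang. lra. Qed.

Lemma sumR_ge_term {A} (s : list A) f a : (forall b, In b s -> 0 <= f b) -> In a s -> f a <= sumR s f.
Proof. induction s; simpl; intros H Ha; [contradiction|]. destruct Ha as [<-|Ha].
  - assert (0 <= sumR s f) by (apply sumR_nonneg; auto). lra.
  - assert (f a <= sumR s f) by (apply IHs; auto). assert (0 <= f a0) by auto. lra. Qed.

Lemma sumR_pos_ex {A} (s : list A) f : 0 < sumR s f -> exists a, In a s /\ 0 < f a.
Proof. induction s; simpl; intros; [lra|]. destruct (Rlt_dec 0 (f a)).
  exists a; auto. destruct IHs as [b [? ?]]. lra. exists b; auto. Qed.

Lemma comp_props m k a : In a (compositions m k) -> length a = m /\ list_sum a = k.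
Proof.
  revert k a; induction m; intros k a H.
  - destruct k; simpl in H; [destruct H as [<-|[]]; auto|contradiction].
  - change (In a (flat_map (fun i => map (cons i) (compositions m (k - i))) (seq 0 (S k)))) in H.
    apply in_flat_map in H as [i [Hi H]]. apply in_map_iff in H as [a' [<- H]].
    apply IHm in H as [H1 H2]. apply in_seq in Hi. simpl. split; [auto|lia].
Qed.

Lemma sumR_seq_shift (m i : nat) f : sumR (seq (S i) m) f = sumR (seq i m) (fun j => f (S j)).
Proof. rewrite <- seq_shift, sumR_map. auto. Qed.

Lemma sumR_seqS (m : nat) f : sumR (seq 0 (S m)) f = sumR (seq 0 m) f + f m.
Proof. rewrite seq_S, sumR_app. simpl. lra. Qed.

Fixpoint ffR (a : R) (g : nat) : R :=
  match g with O => 1 | S g' => ffR a g' * (a - INR g') end.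

Definition facprod (al : list nat) : R := fold_right (fun a acc => INR (fact a) * acc) 1 al.

Fixpoint prodff (al ga : list nat) : R :=
  match al, ga with
  | a :: al', g :: ga' => ffR (INR a) g * prodff al' ga'
  | _, _ => 1
  end.

Definition expo (s : R) (k d : nat) : R :=
  if (d <=? k)%nat then s ^ (k - d) / INR (fact (k - d)) else 0.

Lemma ffR_zero a g : (a < g)%nat -> ffR (INR a) g = 0.
Proof.
  induction g; intros H; [lia|]. simpl.
  destruct (Nat.eq_dec a g) as [->|Hne]. lra.
  rewrite IHg by lia. lra.
Qed.

Lemma ffR_fact a g : (g <= a)%nat -> ffR (INR a) g * INR (fact (a - g)) = INR (fact a).
Proof.
  induction g; intros H. simpl. rewrite Nat.sub_0_r. lra.
  simpl. replace (a - g)%nat with (S (a - S g)) in IHg by lia.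
  rewrite fact_simpl, mult_INR, S_INR in IHg. rewrite <- IHg by lia.
  replace (INR (a - S g)) with (INR a - INR g - 1).
  2:{ rewrite minus_INR by lia. rewrite S_INR. lra. }
  ring.
Qed.

Lemma fact_pos' a : 0 < INR (fact a).
Proof. apply lt_0_INR, lt_O_fact. Qed.

Lemma ffR_div a g : ffR (INR a) g / INR (fact a) =
   if (g <=? a)%nat then / INR (fact (a - g)) else 0.
Proof.
  destruct (Nat.leb_spec g a).
  - rewrite <- (ffR_fact a g) by auto. pose proof (fact_pos' (a-g)). field.
    pose proof (fact_pos' a). rewrite <- (ffR_fact a g) in H1 by auto. split; [lra|].
    intro Hf; rewrite Hf in H1; lra.
  - rewrite ffR_zero by auto. unfold Rdiv; ring.
Qed.

Lemma ffR_add a d e : ffR a (d + e) = ffR a d * ffR (a - INR d) e.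
Proof.
  induction e. simpl. rewrite Nat.add_0_r; ring.
  rewrite Nat.add_succ_r. simpl. rewrite IHe, plus_INR. ring.
Qed.

Lemma sumR_sum_f (N : nat) f : sumR (seq 0 (S N)) f = sum_f_R0 f N.
Proof. induction N. simpl; lra. rewrite sumR_seqS, IHN. simpl. lra. Qed.

Lemma map_add_seq g N s : map (fun b => g + b)%nat (seq s N) = seq (g + s) N.
Proof. revert s; induction N; intros; simpl; auto. rewrite IHN. f_equal. f_equal. lia. Qed.

Lemma seq_split3 g N d : seq 0 (g + S N + d) = seq 0 g ++ map (fun b => g + b)%nat (seq 0 (S N)) ++ seq (g + S N) d.
Proof.
  rewrite !seq_app. rewrite <- app_assoc. f_equal. f_equal.
  rewrite map_add_seq. f_equal. lia.
Qed.

Lemma expo_zero s k d : (k < d)%nat -> expo s k d = 0.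
Proof. intros. unfold expo. destruct (Nat.leb_spec d k); [lia|auto]. Qed.

Lemma key1 g d k u s :
  sumR (seq 0 (S k)) (fun a => ffR (INR a) g / INR (fact a) * u ^ a * expo s (k - a) d)
  = u ^ g * expo (u + s) k (g + d).
Proof.
  destruct (le_lt_dec (g + d) k) as [Hle|Hlt].
  - set (N := (k - g - d)%nat).
    replace (S k) with (g + S N + d)%nat by (unfold N; lia).
    rewrite seq_split3, !sumR_app, sumR_map.
    rewrite (sumR_ext (seq 0 g) _ (fun _ => 0)).
    2:{ intros a Ha. apply in_seq in Ha. rewrite ffR_zero by lia. unfold Rdiv; ring. }
    rewrite (sumR_ext (seq (g + S N) d) _ (fun _ => 0)).
    2:{ intros a Ha. apply in_seq in Ha. rewrite expo_zero by (unfold N in *; lia). ring. }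
    rewrite !sumR_zero.
    unfold expo at 2. destruct (Nat.leb_spec (g + d) k); [|lia].
    replace (k - (g + d))%nat with N by (unfold N; lia).
    rewrite binomial, <- sumR_sum_f.
    unfold Rdiv. rewrite <- sumR_scalr, <- sumR_scal.
    rewrite Rplus_0_l, Rplus_0_r.
    apply sumR_ext. intros b Hb. apply in_seq in Hb.
    change (ffR (INR (g + b)) g * / INR (fact (g + b))) with (ffR (INR (g + b)) g / INR (fact (g + b))).
    rewrite ffR_div. destruct (Nat.leb_spec g (g + b)); [|lia].
    unfold expo. destruct (Nat.leb_spec d (k - (g + b))); [|unfold N in *; lia].
    replace (g + b - g)%nat with b by lia.
    replace (k - (g + b) - d)%nat with (N - b)%nat by (unfold N; lia).
    unfold C. rewrite pow_add.
    pose proof (fact_pos' b). pose proof (fact_pos' (N - b)). pose proof (fact_pos' N).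
    field. lra.
  - rewrite (expo_zero _ k) by lia. rewrite Rmult_0_r.
    rewrite <- (sumR_zero (seq 0 (S k))). apply sumR_ext. intros a Ha.
    apply in_seq in Ha.
    destruct (le_lt_dec g a).
    + rewrite expo_zero by lia. ring.
    + rewrite ffR_zero by lia. unfold Rdiv; ring.
Qed.

Lemma keyG m : forall ga, length ga = m -> forall k i (lam : nat -> R),
  sumR (compositions m k) (fun al => prodff al ga / facprod al * prodpow lam i al)
  = prodpow lam i ga * expo (sumR (seq i m) lam) k (list_sum ga).
Proof.
  induction m; intros ga Hl k i lam.
  - destruct ga; [|discriminate]. destruct k; simpl; unfold expo; simpl.
    + field.
    + lra.
  - destruct ga as [|g ga']; [discriminate|]. simpl in Hl. injection Hl as Hl.
    change (compositions (S m) k) with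
      (flat_map (fun i => map (cons i) (compositions m (k - i))) (seq 0 (S k))).
    rewrite sumR_flat_map.
    rewrite (sumR_ext _ _ (fun a => prodpow lam (S i) ga' *
       (ffR (INR a) g / INR (fact a) * lam i ^ a * expo (sumR (seq (S i) m) lam) (k - a) (list_sum ga')))).
    2:{ intros a _. rewrite sumR_map.
        rewrite (sumR_ext _ _ (fun al' => (ffR (INR a) g / INR (fact a) * lam i ^ a) *
              (prodff al' ga' / facprod al' * prodpow lam (S i) al'))).
        2:{ intros al' _. simpl. unfold Rdiv. rewrite Rinv_mult. ring. }
        rewrite sumR_scal, IHm by auto. ring. }
    rewrite sumR_scal, key1. simpl. ring.
Qed.

Lemma bary_sum n x : sumR (seq 0 (S n)) (bary n x) = 1.
Proof.
  change (seq 0 (S n)) with (0%nat :: seq 1 n). simpl sumR.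
  rewrite sumR_seq_shift. simpl. change (fun j : nat => x j) with x. lra.
Qed.

Lemma prodpow_shift f i be : prodpow f (S i) be = prodpow (fun j => f (S j)) i be.
Proof. revert i; induction be; intros; simpl; auto. rewrite IHbe. auto. Qed.

Lemma ffR_k_pos k d : (d <= k)%nat -> 0 < ffR (INR k) d.
Proof.
  intros H. pose proof (ffR_fact k d H). pose proof (fact_pos' k). pose proof (fact_pos' (k - d)).
  destruct (Rlt_dec 0 (ffR (INR k) d)); auto.
  assert (ffR (INR k) d * INR (fact (k - d)) <= 0).
  { assert (- ffR (INR k) d * INR (fact (k - d)) >= 0).
    { apply Rle_ge, Rmult_le_pos; lra. } lra. } lra.
Qed.

Lemma BI n k be x : length be = n -> (list_sum be <= k)%nat ->
  sumR (compositions (S n) k)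
    (fun al => prodff al (0%nat :: be) / ffR (INR k) (list_sum be) * bernstein n k al x)
  = prodpow x 0 be.
Proof.
  intros Hl Hk.
  rewrite (sumR_ext _ _ (fun al => (INR (fact k) / ffR (INR k) (list_sum be)) *
     (prodff al (0%nat :: be) / facprod al * prodpow (bary n x) 0 al))).
  2:{ intros al _. unfold bernstein, multinom, facprod. unfold Rdiv. ring. }
  rewrite sumR_scal, keyG by (simpl; auto).
  rewrite bary_sum. simpl list_sum. simpl prodpow. rewrite prodpow_shift.
  change (fun j => bary n x (S j)) with x.
  unfold expo. destruct (Nat.leb_spec (list_sum be) k); [|lia].
  rewrite pow1. rewrite <- (ffR_fact k (list_sum be)) by auto.
  pose proof (ffR_k_pos k (list_sum be) Hk). pose proof (fact_pos' (k - list_sum be)).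
  field; split; lra.
Qed.

Definition bk (n l : nat) (c : list nat -> R) (k : nat) (al : list nat) : R :=
  sumR (monomials n l) (fun be => c be * (prodff al (0%nat :: be) / ffR (INR k) (list_sum be))).

Lemma mono_props n l be : In be (monomials n l) -> length be = n /\ (list_sum be <= l)%nat.
Proof.
  unfold monomials. intros H. apply in_flat_map in H as [d [Hd H]].
  apply comp_props in H as [? ?]. apply in_seq in Hd. split; [auto|lia].
Qed.

Lemma bk_ok n l c k : (l <= k)%nat -> is_bernstein_coeffs n l c k (bk n l c k).
Proof.
  intros Hk x. unfold peval, bk.
  rewrite (sumR_ext (monomials n l) _ (fun be => sumR (compositions (S n) k)
     (fun al => c be * (prodff al (0%nat :: be) / ffR (INR k) (list_sum be)) * bernstein n k al x))).
  2:{ intros be Hbe. apply mono_props in Hbe as [H1 H2].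
      rewrite <- (BI n k be x H1) by lia. rewrite <- sumR_scal. apply sumR_ext.
      intros; ring. }
  rewrite sumR_swap. apply sumR_ext. intros al _. rewrite sumR_scalr. auto.
Qed.

Lemma mult_close a b c d : Rabs a <= 1 -> Rabs d <= 1 ->
  Rabs (a * c - b * d) <= Rabs (a - b) + Rabs (c - d).
Proof.
  intros Ha Hd. replace (a * c - b * d) with (a * (c - d) + (a - b) * d) by ring.
  eapply Rle_trans. apply Rabs_triang. rewrite !Rabs_mult.
  assert (Rabs a * Rabs (c - d) <= Rabs (c - d)).
  { rewrite <- (Rmult_1_l (Rabs (c - d))) at 2. apply Rmult_le_compat_r; auto. apply Rabs_pos. }
  assert (Rabs (a - b) * Rabs d <= Rabs (a - b)).
  { rewrite <- (Rmult_1_r (Rabs (a - b))) at 2. apply Rmult_le_compat_l; auto. apply Rabs_pos. }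
  lra.
Qed.

Lemma abs_mult_le1 a b : Rabs a <= 1 -> Rabs b <= 1 -> Rabs (a * b) <= 1.
Proof. intros. rewrite Rabs_mult. rewrite <- (Rmult_1_l 1).
  apply Rmult_le_compat; auto; apply Rabs_pos. Qed.

Lemma pow_le1 a g : Rabs a <= 1 -> Rabs (a ^ g) <= 1.
Proof. intros; induction g; simpl. rewrite Rabs_R1; lra. apply abs_mult_le1; auto. Qed.

Lemma pow_close g a b e : Rabs a <= 1 -> Rabs b <= 1 -> Rabs (a - b) <= e ->
  Rabs (a ^ g - b ^ g) <= INR g * e.
Proof.
  intros Ha Hb He. induction g. simpl. rewrite Rminus_diag, Rabs_R0; lra.
  cbn [pow]. eapply Rle_trans. apply mult_close; auto. apply pow_le1; auto.
  rewrite S_INR; lra.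
Qed.

Lemma ffR_close g (a k L : R) : 0 < k -> 0 <= a <= k -> INR g <= L -> L <= k ->
  Rabs (ffR a g / k ^ g - (a / k) ^ g) <= INR g * (L / k) /\ Rabs (ffR a g / k ^ g) <= 1.
Proof.
  intros Hk Ha. induction g; intros Hg HL.
  - simpl. unfold Rdiv. rewrite Rinv_1, Rmult_1_r, Rminus_diag, Rabs_R0, Rabs_R1. lra.
  - rewrite S_INR in Hg. pose proof (pos_INR g).
    destruct IHg as [IH1 IH2]; try lra.
    assert (E : ffR a (S g) / k ^ S g = ((a - INR g) / k) * (ffR a g / k ^ g)).
    { simpl. field. split; [|lra]. apply pow_nonzero; lra. }
    rewrite E. simpl pow at 2.
    assert (HA : Rabs ((a - INR g) / k) <= 1).
    { apply Rabs_le. split; [|apply Rmult_le_reg_r with k; [lra|]; unfold Rdiv;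
        rewrite Rmult_assoc, Rinv_l; lra].
      apply Rmult_le_reg_r with k; [lra|]. unfold Rdiv; rewrite Rmult_assoc, Rinv_l by lra. lra. }
    assert (HB : Rabs (a / k) <= 1).
    { apply Rabs_le. split; apply Rmult_le_reg_r with k; try lra; unfold Rdiv;
        rewrite Rmult_assoc, Rinv_l; lra. }
    split.
    + eapply Rle_trans. apply mult_close; auto. apply pow_le1; auto.
      replace ((a - INR g) / k - a / k) with (- (INR g / k)) by (field; lra).
      rewrite Rabs_Ropp, Rabs_right.
      2:{ apply Rle_ge. unfold Rdiv. apply Rmult_le_pos; [lra|]. left; apply Rinv_0_lt_compat; lra. }
      rewrite S_INR.
      assert (INR g / k <= L / k).
      { unfold Rdiv. apply Rmult_le_compat_r; [left; apply Rinv_0_lt_compat; lra| lra]. }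
      lra.
    + apply abs_mult_le1; auto.
Qed.

Lemma prodpow_le1 f i be : (forall j, (j < length be)%nat -> Rabs (f (i + j)%nat) <= 1) ->
  Rabs (prodpow f i be) <= 1.
Proof.
  revert i; induction be; intros i H; simpl. rewrite Rabs_R1; lra.
  apply abs_mult_le1. apply pow_le1. rewrite <- (Nat.add_0_r i). apply H. simpl; lia.
  apply IHbe. intros j Hj. replace (S i + j)%nat with (i + S j)%nat by lia. apply H. simpl; lia.
Qed.

Lemma prodpow_lip x y i be e : 0 <= e ->
  (forall j, (j < length be)%nat -> Rabs (x (i + j)%nat) <= 1 /\ Rabs (y (i + j)%nat) <= 1 /\
                                  Rabs (x (i + j)%nat - y (i + j)%nat) <= e) ->
  Rabs (prodpow x i be - prodpow y i be) <= INR (list_sum be) * e.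
Proof.
  intros He. revert i; induction be; intros i H; simpl.
  - rewrite Rminus_diag, Rabs_R0; lra.
  - assert (H0 := H 0%nat ltac:(simpl; lia)). rewrite Nat.add_0_r in H0.
    destruct H0 as [H1 [H2 H3]].
    assert (H' : forall j, (j < length be)%nat -> Rabs (x (S i + j)%nat) <= 1 /\ Rabs (y (S i + j)%nat) <= 1 /\
                                  Rabs (x (S i + j)%nat - y (S i + j)%nat) <= e).
    { intros j Hj. replace (S i + j)%nat with (i + S j)%nat by lia. apply H. simpl; lia. }
    eapply Rle_trans. apply mult_close. apply pow_le1; auto.
    apply prodpow_le1. intros j Hj; apply H'; auto.
    rewrite plus_INR, Rmult_plus_distr_r.
    apply Rplus_le_compat. apply pow_close; auto. apply IHbe; auto.
Qed.

Lemma nth_abs_le1 (al : list nat) (k : R) : 0 < k -> (forall a, In a al -> INR a <= k) ->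
  forall j, Rabs (INR (nth j al 0%nat) / k) <= 1.
Proof.
  intros Hk H j. destruct (nth_in_or_default j al 0%nat) as [Hi|Hd].
  - apply H in Hi. pose proof (pos_INR (nth j al 0%nat)).
    rewrite Rabs_right. apply Rmult_le_reg_r with k; auto. unfold Rdiv.
    rewrite Rmult_assoc, Rinv_l; lra.
    apply Rle_ge. unfold Rdiv. apply Rmult_le_pos; auto. left; apply Rinv_0_lt_compat; auto.
  - rewrite Hd. simpl. unfold Rdiv. rewrite Rmult_0_l, Rabs_R0. lra.
Qed.

Lemma prodff_close be : forall al (k L : R), 0 < k -> length al = length be ->
  (forall a, In a al -> INR a <= k) -> (forall g, In g be -> INR g <= L) -> L <= k ->
  Rabs (prodff al be / k ^ (list_sum be) - prodpow (fun i => INR (nth i al 0%nat) / k) 0 be)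
    <= INR (list_sum be) * (L / k) /\ Rabs (prodff al be / k ^ (list_sum be)) <= 1.
Proof.
  induction be as [|g be IH]; intros al k L Hk Hl Hal Hbe HL.
  - simpl. unfold Rdiv. rewrite Rinv_1, Rmult_1_r.
    destruct al; simpl; rewrite Rminus_diag, Rabs_R0, ?Rabs_R1; lra.
  - destruct al as [|a al]; [discriminate|]. simpl in Hl. injection Hl as Hl.
    assert (Ha : 0 <= INR a <= k) by (split; [apply pos_INR| apply Hal; simpl; auto]).
    destruct (ffR_close g (INR a) k L Hk Ha) as [F1 F2]. apply Hbe; simpl; auto. auto.
    destruct (IH al k L Hk Hl) as [I1 I2]. intros; apply Hal; simpl; auto.
    intros; apply Hbe; simpl; auto. auto.
    assert (E : prodff (a :: al) (g :: be) / k ^ list_sum (g :: be) =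
                (ffR (INR a) g / k ^ g) * (prodff al be / k ^ list_sum be)).
    { simpl. rewrite pow_add. field. split; apply pow_nonzero; lra. }
    rewrite E. simpl prodpow. rewrite prodpow_shift.
    change (fun j => INR (nth (S j) (a :: al) 0%nat) / k) with (fun j => INR (nth j al 0%nat) / k).
    split.
    + eapply Rle_trans. apply mult_close; auto.
      apply prodpow_le1. intros; apply nth_abs_le1; auto. intros; apply Hal; simpl; auto.
      simpl list_sum. rewrite plus_INR. lra.
    + apply abs_mult_le1; auto.
Qed.

Lemma sum_nth (s : list nat) : sumR (seq 0 (length s)) (fun i => INR (nth i s 0%nat)) = INR (list_sum s).
Proof.
  induction s; simpl. auto. rewrite sumR_seq_shift. simpl. rewrite IHs, plus_INR. lra.
Qed.

Lemma T_close (al' be : list nat) (k d l : nat) : (1 <= k)%nat -> (l <= k)%nat ->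
  length al' = length be -> (forall a, In a al' -> (a <= k)%nat) ->
  list_sum be = d -> (d <= l)%nat ->
  Rabs ((prodff al' be / INR k ^ d) * (ffR (INR k - INR d) (l - d) / INR k ^ (l - d))
        - prodpow (fun i => INR (nth i al' 0%nat) / INR k) 0 be) <= 2 * INR l * INR l / INR k.
Proof.
  intros Hk1 Hlk Hlen Hal Hd Hdl.
  assert (Hk : 0 < INR k) by (apply lt_0_INR; lia).
  assert (HL : INR l <= INR k) by (apply le_INR; auto).
  assert (Hdl' : INR d <= INR l) by (apply le_INR; auto).
  pose proof (pos_INR d).
  destruct (prodff_close be al' (INR k) (INR l) Hk Hlen) as [P1 P2].
  { intros a Ha. apply le_INR. auto. }
  { intros g Hg. apply le_INR. rewrite <- Hd in Hdl.
    assert (forall s, In g s -> (g <= list_sum s)%nat).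
    { induction s; simpl; intros; [contradiction|]. destruct H0; [subst; lia|]. apply IHs in H0; lia. }
    apply H0 in Hg. lia. }
  auto.
  rewrite Hd in P1, P2.
  destruct (ffR_close (l - d) (INR k - INR d) (INR k) (INR l) Hk) as [F1 F2].
  { split; lra. } { rewrite minus_INR by auto. lra. } auto.
  assert (Hq : Rabs ((INR k - INR d) / INR k) <= 1).
  { apply Rabs_le. split; apply Rmult_le_reg_r with (INR k); auto; unfold Rdiv;
      rewrite Rmult_assoc, Rinv_l; lra. }
  assert (Pw' : Rabs (((INR k - INR d) / INR k) ^ (l - d) - 1) <= INR (l - d) * (INR d / INR k)).
  { replace (((INR k - INR d) / INR k) ^ (l - d) - 1) with
      (((INR k - INR d) / INR k) ^ (l - d) - 1 ^ (l - d)) by (rewrite pow1; ring).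
    apply pow_close; auto. rewrite Rabs_R1; lra. replace ((INR k - INR d) / INR k - 1) with (- (INR d / INR k)) by (field; lra).
    rewrite Rabs_Ropp, Rabs_right. lra. apply Rle_ge. unfold Rdiv; apply Rmult_le_pos; auto.
    left; apply Rinv_0_lt_compat; auto. }
  replace (prodpow (fun i => INR (nth i al' 0%nat) / INR k) 0 be) with
    (prodpow (fun i => INR (nth i al' 0%nat) / INR k) 0 be * 1) by ring.
  eapply Rle_trans. apply mult_close; auto. rewrite Rabs_R1; lra.
  assert (Rabs (ffR (INR k - INR d) (l - d) / INR k ^ (l - d) - 1) <=
          INR (l - d) * (INR l / INR k) + INR (l - d) * (INR d / INR k)).
  { replace (ffR (INR k - INR d) (l - d) / INR k ^ (l - d) - 1) with
      ((ffR (INR k - INR d) (l - d) / INR k ^ (l - d) - ((INR k - INR d) / INR k) ^ (l - d))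
       + (((INR k - INR d) / INR k) ^ (l - d) - 1)) by ring.
    eapply Rle_trans. apply Rabs_triang. apply Rplus_le_compat; auto. }
  rewrite minus_INR in H0 by auto.
  assert (E : INR d * (INR l / INR k) + ((INR l - INR d) * (INR l / INR k) + (INR l - INR d) * (INR d / INR k))
              <= 2 * INR l * INR l / INR k).
  { unfold Rdiv. rewrite <- !Rmult_assoc.
    assert (0 < / INR k) by (apply Rinv_0_lt_compat; auto).
    rewrite <- !Rmult_plus_distr_r. apply Rmult_le_compat_r. lra. nra. }
  lra.
Qed.

Definition Csum (n l : nat) (c : list nat -> R) := sumR (monomials n l) (fun be => Rabs (c be)).

Lemma bk_pos n l c k eps : 0 < eps -> (forall y, in_simplex n y -> eps <= peval n l c y) ->
  (l <= k)%nat -> (1 <= k)%nat -> 2 * Csum n l c * INR l * INR l < eps * INR k ->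
  forall al, In al (compositions (S n) k) -> 0 < bk n l c k al.
Proof.
  intros He Hp Hlk Hk1 Hbig al Hal.
  assert (Hk : 0 < INR k) by (apply lt_0_INR; lia).
  pose proof (comp_props _ _ _ Hal) as [Hlen Hsum].
  destruct al as [|a0 al']; [discriminate|]. simpl in Hlen, Hsum. injection Hlen as Hlen.
  assert (Hal' : forall a, In a al' -> (a <= k)%nat).
  { intros a Ha. assert (forall s, In a s -> (a <= list_sum s)%nat).
    { induction s; simpl; intros; [contradiction|]. destruct H; [subst; lia|]. apply IHs in H; lia. }
    apply H in Ha. lia. }
  set (y := fun i => INR (nth i al' 0%nat) / INR k).
  assert (Hy : in_simplex n y).
  { split.
    - intros i _. unfold y. unfold Rdiv. apply Rmult_le_pos. apply pos_INR. left; apply Rinv_0_lt_compat; auto.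
    - unfold y. unfold Rdiv. rewrite sumR_scalr. rewrite <- Hlen, sum_nth.
      apply Rmult_le_reg_r with (INR k); auto. rewrite Rmult_assoc, Rinv_l by lra.
      rewrite Rmult_1_r, Rmult_1_l. apply le_INR. lia. }
  pose proof (Hp y Hy) as Py.
  set (F := ffR (INR k) l / INR k ^ l).
  assert (HF : 0 < F).
  { unfold F, Rdiv. apply Rmult_lt_0_compat. apply ffR_k_pos; auto.
    apply Rinv_0_lt_compat, pow_lt; auto. }
  assert (Hbk : bk n l c k (a0 :: al') * F =
     sumR (monomials n l) (fun be => c be * ((prodff al' be / INR k ^ (list_sum be)) *
        (ffR (INR k - INR (list_sum be)) (l - list_sum be) / INR k ^ (l - list_sum be))))).
  { unfold bk. rewrite <- sumR_scalr. apply sumR_ext. intros be Hbe.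
    apply mono_props in Hbe as [_ Hd].
    unfold F. simpl prodff. simpl ffR.
    replace l with (list_sum be + (l - list_sum be))%nat at 1 2 by lia.
    rewrite ffR_add, pow_add.
    pose proof (ffR_k_pos k (list_sum be) ltac:(lia)).
    field. repeat split; try apply pow_nonzero; lra. }
  assert (Hlow : peval n l c y - Csum n l c * (2 * INR l * INR l / INR k) <= bk n l c k (a0 :: al') * F).
  { rewrite Hbk.
    replace (peval n l c y - Csum n l c * (2 * INR l * INR l / INR k)) with
      (sumR (monomials n l) (fun be => c be * prodpow y 0 be + (- (2 * INR l * INR l / INR k)) * Rabs (c be))).
    2:{ rewrite sumR_plus, sumR_scal. unfold peval, Csum. ring. }
    apply sumR_le. intros be Hbe. apply mono_props in Hbe as [Hl1 Hd].
    assert (T := T_close al' be k (list_sum be) l Hk1 Hlk ltac:(lia) Hal' eq_refl Hd).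
    fold y in T.
    set (T0 := prodff al' be / INR k ^ list_sum be *
         (ffR (INR k - INR (list_sum be)) (l - list_sum be) / INR k ^ (l - list_sum be))) in *.
    assert (Rabs (c be * T0 - c be * prodpow y 0 be) <= Rabs (c be) * (2 * INR l * INR l / INR k)).
    { rewrite <- Rmult_minus_distr_l, Rabs_mult. apply Rmult_le_compat_l; auto. apply Rabs_pos. }
    revert H; unfold Rabs; destruct (Rcase_abs _); intros; lra. }
  assert (Hpos : 0 < bk n l c k (a0 :: al') * F).
  { assert (Csum n l c * (2 * INR l * INR l / INR k) < eps).
    { apply Rmult_lt_reg_r with (INR k); auto. unfold Rdiv.
      replace (Csum n l c * (2 * INR l * INR l * / INR k) * INR k) with
        (2 * Csum n l c * INR l * INR l) by (field; lra). lra. }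
    lra. }
  apply Rmult_lt_reg_r with F; auto. lra.
Qed.

Definition cube (n : nat) (x : nat -> R) : Prop := forall i, (i < n)%nat -> 0 <= x i <= 1.
Definition upd (x : nat -> R) (n : nat) (t : R) : nat -> R := fun i => if Nat.eqb i n then t else x i.
Definition clamp (t : R) : R := Rmin 1 (Rmax 0 t).

Lemma clamp_lip t s : Rabs (clamp t - clamp s) <= Rabs (t - s).
Proof.
  unfold clamp, Rmin, Rmax.
  repeat destruct (Rle_dec _ _); unfold Rabs; repeat destruct (Rcase_abs _); lra.
Qed.

Lemma clamp_range t : 0 <= clamp t <= 1.
Proof. unfold clamp, Rmin, Rmax. repeat destruct (Rle_dec _ _); lra. Qed.

Lemma clamp_id t : 0 <= t <= 1 -> clamp t = t.
Proof. intros. unfold clamp, Rmin, Rmax. repeat destruct (Rle_dec _ _); lra. Qed.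

Lemma upd_cube n x t : cube n x -> 0 <= t <= 1 -> cube (S n) (upd x n t).
Proof.
  intros Hx Ht i Hi. unfold upd. destruct (Nat.eqb_spec i n); auto. apply Hx. lia.
Qed.

Lemma abs_le_split a b : -b <= a -> a <= b -> Rabs a <= b.
Proof. intros. unfold Rabs. destruct (Rcase_abs a); lra. Qed.

Lemma abs_ge a : a <= Rabs a /\ - a <= Rabs a.
Proof. unfold Rabs. destruct (Rcase_abs a); lra. Qed.

Lemma K n : forall (f : (nat -> R) -> R) L, 0 <= L ->
  (forall x y d, 0 <= d -> cube n x -> cube n y -> (forall i, (i < n)%nat -> Rabs (x i - y i) <= d) ->
     Rabs (f x - f y) <= L * d) ->
  (forall x, cube n x -> 0 < f x) ->
  exists e, 0 < e /\ forall x, cube n x -> e <= f x.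
Proof.
  induction n; intros f L HL Hlip Hpos.
  - exists (f (fun _ => 0)). split. apply Hpos. intros i Hi; lia.
    intros x Hx. assert (H := Hlip x (fun _ => 0) 0 (Rle_refl 0) Hx ltac:(intros i Hi; lia)
                               ltac:(intros i Hi; lia)).
    rewrite Rmult_0_r in H. pose proof (abs_ge (f x - f (fun _ => 0))). lra.
  -
    assert (Hmin : forall x, cube n x -> exists t, 0 <= t <= 1 /\
               forall c, 0 <= c <= 1 -> f (upd x n t) <= f (upd x n c)).
    { intros x Hx.
      set (h := fun t => f (upd x n (clamp t))).
      assert (Hh : forall t s, Rabs (h t - h s) <= L * Rabs (t - s)).
      { intros t s. unfold h. eapply Rle_trans. apply Hlip. apply Rabs_pos.
        apply upd_cube; auto; apply clamp_range. apply upd_cube; auto; apply clamp_range.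
        intros i Hi. unfold upd. destruct (Nat.eqb_spec i n). apply clamp_lip.
        rewrite Rminus_diag, Rabs_R0. apply Rabs_pos. lra. }
      destruct (continuity_ab_min h 0 1) as [t [Ht1 Ht2]]. lra.
      { intros c _. unfold continuity_pt, continue_in, limit1_in, limit_in.
        intros eps Heps. exists (eps / (L + 1)). split.
        apply Rdiv_lt_0_compat; lra.
        intros x0 [_ Hd]. simpl in Hd |- *. unfold R_dist in *.
        eapply Rle_lt_trans. apply Hh.
        apply Rle_lt_trans with (L * (eps / (L + 1))).
        apply Rmult_le_compat_l; lra.
        apply Rmult_lt_reg_r with (L + 1). lra. replace (L * (eps / (L + 1)) * (L + 1)) with (L * eps) by (field; lra). nra. }
      exists t. split; auto. intros c Hc.
      assert (H := Ht1 c Hc). unfold h in H. rewrite !clamp_id in H; auto. }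
    set (tm := fun x => epsilon (inhabits 0) (fun t => 0 <= t <= 1 /\
               forall c, 0 <= c <= 1 -> f (upd x n t) <= f (upd x n c))).
    assert (Htm : forall x, cube n x -> 0 <= tm x <= 1 /\
               forall c, 0 <= c <= 1 -> f (upd x n (tm x)) <= f (upd x n c)).
    { intros x Hx. unfold tm. apply epsilon_spec. apply Hmin; auto. }
    destruct (IHn (fun x => f (upd x n (tm x))) L HL) as [e [He He2]].
    + intros x y d Hd Hx Hy Hxy.
      destruct (Htm x Hx) as [Hx1 Hx2]. destruct (Htm y Hy) as [Hy1 Hy2].
      assert (G : forall u v t, cube n u -> cube n v -> 0 <= t <= 1 ->
                (forall i, (i < n)%nat -> Rabs (u i - v i) <= d) ->
                Rabs (f (upd u n t) - f (upd v n t)) <= L * d).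
      { intros u v t Hu Hv Ht Huv. apply Hlip; auto; try apply upd_cube; auto.
        intros i Hi. unfold upd. destruct (Nat.eqb_spec i n).
        rewrite Rminus_diag, Rabs_R0; auto. apply Huv; lia. }
      pose proof (G x y (tm y) Hx Hy Hy1 Hxy). 
      assert (Hyx : forall i, (i < n)%nat -> Rabs (y i - x i) <= d).
      { intros i Hi. rewrite Rabs_minus_sym. auto. }
      pose proof (G y x (tm x) Hy Hx Hx1 Hyx).
      pose proof (Hx2 (tm y) Hy1). pose proof (Hy2 (tm x) Hx1).
      pose proof (abs_ge (f (upd x n (tm y)) - f (upd y n (tm y)))).
      pose proof (abs_ge (f (upd y n (tm x)) - f (upd x n (tm x)))).
      apply abs_le_split; lra.
    + intros x Hx. apply Hpos. apply upd_cube; auto. apply Htm; auto.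
    + exists e. split; auto. intros x Hx.
      assert (Hxn : cube n x) by (intros i Hi; apply Hx; lia).
      assert (H1 := He2 x Hxn). simpl in H1.
      destruct (Htm x Hxn) as [_ H2].
      assert (H3 := H2 (x n) (Hx n ltac:(lia))).
      assert (H4 := Hlip (upd x n (x n)) x 0 (Rle_refl 0)
                   (upd_cube n x (x n) Hxn (Hx n ltac:(lia))) Hx).
      assert (H5 : forall i, (i < S n)%nat -> Rabs (upd x n (x n) i - x i) <= 0).
      { intros i Hi. unfold upd. destruct (Nat.eqb_spec i n); subst; rewrite Rminus_diag, Rabs_R0; lra. }
      specialize (H4 H5). rewrite Rmult_0_r in H4.
      pose proof (abs_ge (f (upd x n (x n)) - f x)). lra.
Qed.

Lemma sumR_minus {A} (s : list A) f g : sumR s (fun a => f a - g a) = sumR s f - sumR s g.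
Proof. induction s; simpl; [lra| rewrite IHs; lra]. Qed.

Lemma peval_lip n l c x y d : 0 <= d ->
  (forall i, (i < n)%nat -> Rabs (x i) <= 1 /\ Rabs (y i) <= 1 /\ Rabs (x i - y i) <= d) ->
  Rabs (peval n l c x - peval n l c y) <= Csum n l c * INR l * d.
Proof.
  intros Hd H. unfold peval, Csum.
  replace (sumR (monomials n l) (fun beta => c beta * prodpow x 0 beta) -
           sumR (monomials n l) (fun beta => c beta * prodpow y 0 beta)) with
     (sumR (monomials n l) (fun beta => c beta * (prodpow x 0 beta - prodpow y 0 beta))).
  2:{ rewrite <- sumR_minus. apply sumR_ext. intros; ring. }
  eapply Rle_trans. apply sumR_abs. rewrite <- !sumR_scalr. apply sumR_le.
  intros be Hbe. apply mono_props in Hbe as [Hl Hs]. rewrite Rabs_mult, Rmult_assoc.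
  apply Rmult_le_compat_l. apply Rabs_pos.
  eapply Rle_trans. apply (prodpow_lip x y 0 be d Hd). intros j Hj. apply H. lia.
  apply Rmult_le_compat_r; auto. apply le_INR; auto.
Qed.

Lemma sumR_const {A} (s : list A) d : sumR s (fun _ => d) = INR (length s) * d.
Proof. induction s; simpl length; [simpl; lra|]. rewrite S_INR. simpl. rewrite IHs. lra. Qed.

Definition rad (n : nat) (u : nat -> R) : nat -> R := fun i => u i / Rmax 1 (sumR (seq 0 n) u).

Lemma Rmax_lip a b : Rabs (Rmax 1 a - Rmax 1 b) <= Rabs (a - b).
Proof. unfold Rmax. repeat destruct (Rle_dec _ _); unfold Rabs; repeat destruct (Rcase_abs _); lra. Qed.

Lemma sum_diff n u v d : (forall i, (i < n)%nat -> Rabs (u i - v i) <= d) ->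
  Rabs (sumR (seq 0 n) u - sumR (seq 0 n) v) <= INR n * d.
Proof.
  intros H. replace (sumR (seq 0 n) u - sumR (seq 0 n) v) with (sumR (seq 0 n) (fun i => u i - v i)).
  2:{ rewrite sumR_minus. auto. }
  eapply Rle_trans. apply sumR_abs. rewrite <- (length_seq n 0) at 2. rewrite <- sumR_const.
  apply sumR_le. intros i Hi. apply in_seq in Hi. apply H. lia.
Qed.

Lemma simplex_cube n y : in_simplex n y -> cube n y.
Proof.
  intros [H1 H2] i Hi. split. auto.
  assert (y i <= sumR (seq 0 n) y). { apply sumR_ge_term. intros b Hb; apply in_seq in Hb; apply H1; lia.
    apply in_seq; lia. } lra.
Qed.

Lemma cube_sum_nonneg n u : cube n u -> 0 <= sumR (seq 0 n) u.
Proof. intros H. apply sumR_nonneg. intros a Ha. apply in_seq in Ha. apply H. lia. Qed.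

Lemma rad_simplex n u : cube n u -> in_simplex n (rad n u).
Proof.
  intros Hu. pose proof (Rmax_l 1 (sumR (seq 0 n) u)). pose proof (Rmax_r 1 (sumR (seq 0 n) u)).
  split.
  - intros i Hi. unfold rad. unfold Rdiv. apply Rmult_le_pos. apply Hu; auto. left; apply Rinv_0_lt_compat; lra.
  - unfold rad. unfold Rdiv. rewrite sumR_scalr.
    apply Rmult_le_reg_r with (Rmax 1 (sumR (seq 0 n) u)). lra.
    rewrite Rmult_assoc, Rinv_l by lra. rewrite Rmult_1_r, Rmult_1_l. auto.
Qed.

Lemma rad_cube n u : cube n u -> forall i, (i < n)%nat -> 0 <= rad n u i <= 1.
Proof.
  intros Hu i Hi. pose proof (Rmax_l 1 (sumR (seq 0 n) u)). destruct (Hu i Hi).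
  unfold rad. split. unfold Rdiv. apply Rmult_le_pos. auto. left; apply Rinv_0_lt_compat; lra.
  apply Rmult_le_reg_r with (Rmax 1 (sumR (seq 0 n) u)). lra. unfold Rdiv.
  rewrite Rmult_assoc, Rinv_l by lra. nra.
Qed.

Lemma rad_id n y : in_simplex n y -> forall i, rad n y i = y i.
Proof.
  intros [_ H] i. unfold rad. rewrite Rmax_left by auto. field.
Qed.

Lemma rad_lip n u v d : 0 <= d -> cube n u -> cube n v -> (forall i, (i < n)%nat -> Rabs (u i - v i) <= d) ->
  forall i, (i < n)%nat -> Rabs (rad n u i - rad n v i) <= (INR n + 1) * d.
Proof.
  intros Hd Hu Hv H i Hi. unfold rad.
  set (M := Rmax 1 (sumR (seq 0 n) u)). set (M' := Rmax 1 (sumR (seq 0 n) v)).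
  assert (HM : 1 <= M) by apply Rmax_l. assert (HM' : 1 <= M') by apply Rmax_l.
  assert (HMM : Rabs (M - M') <= INR n * d).
  { eapply Rle_trans. apply Rmax_lip. apply sum_diff; auto. }
  replace (u i / M - v i / M') with ((u i - v i) / M + v i * (M' - M) / (M * M')) by (field; lra).
  eapply Rle_trans. apply Rabs_triang.
  assert (Rabs ((u i - v i) / M) <= d).
  { unfold Rdiv. rewrite Rabs_mult, Rabs_inv, (Rabs_right M) by lra.
    apply Rmult_le_reg_r with M. lra. rewrite Rmult_assoc, Rinv_l by lra.
    pose proof (H i Hi). nra. }
  assert (Rabs (v i * (M' - M) / (M * M')) <= INR n * d).
  { unfold Rdiv. rewrite !Rabs_mult, Rabs_inv, Rabs_mult, (Rabs_right M), (Rabs_right M') by lra.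
    rewrite Rabs_minus_sym.
    assert (Rabs (v i) <= 1). { destruct (Hv i Hi). rewrite Rabs_right; lra. }
    apply Rmult_le_reg_r with (M * M'). nra. rewrite Rmult_assoc, Rinv_l by nra.
    pose proof (Rabs_pos (v i)). pose proof (Rabs_pos (M - M')). pose proof (pos_INR n).
    assert (Rabs (v i) * Rabs (M - M') <= Rabs (M - M')) by nra.
    assert (0 <= INR n * d) by nra.
    assert (1 <= M * M') by nra.
    assert (INR n * d * 1 <= INR n * d * (M * M')) by (apply Rmult_le_compat_l; lra).
    nra. }
  lra.
Qed.

Lemma peval_min n l c : (forall y, in_simplex n y -> 0 < peval n l c y) ->
  exists eps, 0 < eps /\ forall y, in_simplex n y -> eps <= peval n l c y.
Proof.
  intros Hp.
  assert (HC : 0 <= Csum n l c). { unfold Csum. apply sumR_nonneg. intros; apply Rabs_pos. }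
  pose proof (pos_INR l). pose proof (pos_INR n).
  destruct (K n (fun u => peval n l c (rad n u)) (Csum n l c * INR l * (INR n + 1))) as [e [He He2]].
  - apply Rmult_le_pos. apply Rmult_le_pos; auto. lra.
  - intros x y d Hd Hx Hy Hxy.
    eapply Rle_trans. apply (peval_lip n l c _ _ ((INR n + 1) * d)). nra.
    intros i Hi. destruct (rad_cube n x Hx i Hi), (rad_cube n y Hy i Hi).
    split. rewrite Rabs_right; lra. split. rewrite Rabs_right; lra.
    apply rad_lip; auto. right; ring.
  - intros x Hx. apply Hp. apply rad_simplex; auto.
  - exists e. split; auto. intros y Hy.
    assert (H1 := He2 y (simplex_cube n y Hy)). simpl in H1.
    assert (H2 := peval_lip n l c (rad n y) y 0 (Rle_refl 0)).
    rewrite Rmult_0_r in H2.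
    assert (H3 : Rabs (peval n l c (rad n y) - peval n l c y) <= 0).
    { apply H2. intros i Hi. rewrite rad_id by auto. destruct (simplex_cube n y Hy i Hi).
      rewrite Rminus_diag, Rabs_R0. rewrite Rabs_right; lra. }
    pose proof (abs_ge (peval n l c (rad n y) - peval n l c y)). lra.
Qed.

Lemma prodff_zeros al m : prodff al (repeat 0%nat m) = 1.
Proof. revert m; induction al; intros m; destruct m; simpl; auto. rewrite IHal. ring. Qed.

Lemma prodpow_zeros x i m : prodpow x i (repeat 0%nat m) = 1.
Proof. revert i; induction m; intros; simpl; auto. rewrite IHm. ring. Qed.

Lemma list_sum_zeros m : list_sum (repeat 0%nat m) = 0%nat.
Proof. induction m; simpl; auto. Qed.

Lemma prodpow_nonneg f i be : (forall j, (j < length be)%nat -> 0 <= f (i + j)%nat) -> 0 <= prodpow f i be.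
Proof.
  revert i; induction be; intros i H; simpl. lra.
  apply Rmult_le_pos. apply pow_le. rewrite <- (Nat.add_0_r i). apply H. simpl; lia.
  apply IHbe. intros j Hj. replace (S i + j)%nat with (i + S j)%nat by lia. apply H. simpl; lia.
Qed.

Lemma facprod_pos al : 0 < facprod al.
Proof. induction al; simpl. lra. apply Rmult_lt_0_compat; auto. apply fact_pos'. Qed.

Lemma bern_nonneg n k al y : in_simplex n y -> In al (compositions (S n) k) -> 0 <= bernstein n k al y.
Proof.
  intros [Hy1 Hy2] Hal. apply comp_props in Hal as [Hl _].
  unfold bernstein. apply Rmult_le_pos.
  - unfold multinom. change (fold_right (fun a acc => INR (fact a) * acc) 1 al) with (facprod al).
    unfold Rdiv. apply Rmult_le_pos. left; apply fact_pos'. left; apply Rinv_0_lt_compat, facprod_pos.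
  - apply prodpow_nonneg. intros j Hj. simpl. destruct j; simpl. lra. apply Hy1. lia.
Qed.

Lemma q_pos n l q : (forall b, is_bernstein_coeffs n l q l b -> forall al, In al (compositions (S n) l) -> 0 < b al) ->
  forall y, in_simplex n y -> 0 < peval n l q y.
Proof.
  intros Hq y Hy. rewrite (bk_ok n l q l (le_n l) y).
  assert (HB := BI n l (repeat 0%nat n) y (repeat_length _ _) ltac:(rewrite list_sum_zeros; lia)).
  rewrite prodpow_zeros in HB.
  destruct (sumR_pos_ex _ _ ltac:(rewrite HB; lra)) as [al [Hal Hpos]].
  rewrite list_sum_zeros in Hpos. change (0%nat :: repeat 0%nat n) with (repeat 0%nat (S n)) in Hpos.
  rewrite prodff_zeros in Hpos. simpl ffR in Hpos.
  replace (1 / 1 * bernstein n l al y) with (bernstein n l al y) in Hpos by field.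
  eapply Rlt_le_trans. 2:{ apply (sumR_ge_term _ _ al). intros b Hb.
    apply Rmult_le_pos. left; apply Hq; auto. apply bk_ok; auto. apply bern_nonneg; auto. auto. }
  apply Rmult_lt_0_compat; auto. apply Hq; auto. apply bk_ok; auto.
Qed.

Theorem corollary5p4 (n l : nat) (p q : list nat -> R) :
  (forall x : nat -> R, in_simplex n x -> 0 < peval n l p x / peval n l q x) ->
  (forall j : nat, (l <= j)%nat ->
     forall b : list nat -> R, is_bernstein_coeffs n l q j b ->
     forall alpha, In alpha (compositions (S n) j) -> 0 < b alpha) ->
  exists k : nat, (l <= k)%nat /\
    (exists bp bq, is_bernstein_coeffs n l p k bp /\ is_bernstein_coeffs n l q k bq) /\
    (forall bp bq : list nat -> R,
       is_bernstein_coeffs n l p k bp -> is_bernstein_coeffs n l q k bq ->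
       forall alpha, In alpha (compositions (S n) k) -> 0 < bp alpha / bq alpha).
Proof.
  intros Hf Hq.
  assert (Hqp : forall y, in_simplex n y -> 0 < peval n l q y).
  { apply q_pos. apply Hq. lia. }
  assert (Hpp : forall y, in_simplex n y -> 0 < peval n l p y).
  { intros y Hy. pose proof (Hf y Hy). pose proof (Hqp y Hy).
    replace (peval n l p y) with (peval n l p y / peval n l q y * peval n l q y) by (field; lra).
    apply Rmult_lt_0_compat; auto. }
  destruct (peval_min n l p Hpp) as [eps [He Heps]].
  destruct (INR_unbounded (2 * Csum n l p * INR l * INR l / eps)) as [N HN].
  set (k := (N + l + 1)%nat).
  assert (Hlk : (l <= k)%nat) by (unfold k; lia).
  assert (Hk1 : (1 <= k)%nat) by (unfold k; lia).
  assert (Hbig : 2 * Csum n l p * INR l * INR l < eps * INR k).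
  { assert (INR N <= INR k) by (apply le_INR; unfold k; lia).
    apply Rmult_lt_reg_r with (/ eps). apply Rinv_0_lt_compat; auto.
    replace (eps * INR k * / eps) with (INR k) by (field; lra). unfold Rdiv in HN. lra. }
  exists k. split; auto. split.
  { exists (bk n l p k), (bk n l q k). split; apply bk_ok; auto. }
  intros bp bq Hbp Hbq al Hal.
  assert (Hbqa : 0 < bq al) by (apply (Hq k Hlk bq Hbq al Hal)).
  assert (Heq : bp al = bk n l p k al).
  { destruct (Req_dec (bp al) (bk n l p k al)) as [E|E]; auto. exfalso.
    set (d := bp al - bk n l p k al).
    assert (Hd : d <> 0) by (unfold d; lra).
    set (t := - (bk n l q k al + 1) / d).
    set (b' := fun be => bk n l q k be + t * (bp be - bk n l p k be)).
    assert (Hb' : is_bernstein_coeffs n l q k b').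
    { intros x. unfold b'.
      rewrite (sumR_ext _ _ (fun be => bk n l q k be * bernstein n k be x +
          t * (bp be * bernstein n k be x - bk n l p k be * bernstein n k be x))).
      2:{ intros; ring. }
      rewrite sumR_plus, sumR_scal, sumR_minus.
      rewrite <- (bk_ok n l q k Hlk x), <- (Hbp x), <- (bk_ok n l p k Hlk x). ring. }
    assert (H := Hq k Hlk b' Hb' al Hal). unfold b', t in H.
    fold d in H. replace (bk n l q k al + - (bk n l q k al + 1) / d * d) with (-1) in H by (field; auto).
    lra. }
  rewrite Heq. unfold Rdiv. apply Rmult_lt_0_compat.
  apply (bk_pos n l p k eps He Heps Hlk Hk1 Hbig al Hal).
  apply Rinv_0_lt_compat; auto.
Qed.
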